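(* Let $(\Omega,c)$ be a network with states $a,x,z\in\Omega$ such that $c(u,z)=0$ for all $u\notin\{x,z\}$. Let $x=x_0,x_1,\dots,x_k=a$ be any sequence of states such that there is some $\rho>0$ for which $c(x_{i-1},x_i)\ge\rho^{-1}c(x,z)$ for $i=1,\dots,k$. Then, for the Markov chain $(X_t)$ associated with the network, $$\mathbb P\{\tau_a<\tau_z\mid X_0=x\}\ge\frac{1}{k\rho+1}.$$
   Context: A network $(\Omega,c)$ consists of a finite state space $\Omega$ and a symmetric function $c:\Omega\times\Omega\to\mathbb R_{\ge0}$ (the conductance). Its associated Markov chain has transition probabilities $P(u,v)=c(u,v)/\sum_{w\in\Omega}c(u,w)$. For a state $s$, $\tau_s=\min\{t\ge0: X_t=s\}$. *)

(* Defs.v *)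
From HB Require Import structures.
From mathcomp Require Import all_boot all_order all_algebra.
From mathcomp Require Import all_classical all_reals all_analysis.
Import numFieldNormedType.Exports.
Set Implicit Arguments. Unset Strict Implicit. Unset Printing Implicit Defensive.
Import Order.TTheory GRing.Theory Num.Theory.
Local Open Scope ring_scope.

Section Network.
Variables (R : realType) (Omega : finType) (c : Omega -> Omega -> R).

Definition trans (u v : Omega) : R := c u v / \sum_(w : Omega) c u w.

(* hitn a z n u = P_u{ tau_a <= n and tau_a < tau_z }, by first-step analysis *)
Fixpoint hitn (a z : Omega) (n : nat) (u : Omega) : R :=
  if u == z then 0
  else if u == a then 1
  else match n with
       | 0%N => 0
       | n'.+1 => \sum_(v : Omega) trans u v * hitn a z n' v
       end.

(* P_u{ tau_a < tau_z } : limit of the nondecreasing sequence above *)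
Definition hit_before (a z u : Omega) : R := limn (fun n : nat => (hitn a z n u : R^o)).

Definition connected_network : Prop :=
  forall u v : Omega, connect (fun s t => 0 < c s t) u v.
End Network.

(* Main.v *)
Require Import Defs.
From HB Require Import structures.
From mathcomp Require Import all_boot all_order all_algebra.
From mathcomp Require Import all_classical all_reals all_analysis.
From mathcomp Require Import ring lra zify.
Import numFieldNormedType.Exports.
Import Order.TTheory GRing.Theory Num.Theory.
Local Open Scope ring_scope.

Section Lim.
Context (R : realType) (Omega : finType) (c : Omega -> Omega -> R)
  (c_ge0 : forall u v, 0 <= c u v) (a z : Omega).
Local Open Scope classical_set_scope.

Lemma trans_ge0 u v : 0 <= trans c u v.
Proof. by rewrite /trans divr_ge0 // sumr_ge0. Qed.

Lemma sum_trans_le1 u : \sum_v trans c u v <= 1.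
Proof.
rewrite /trans -mulr_suml; set S := \sum__ _.
have [->|S0] := eqVneq S 0; first by rewrite invr0 mulr0.
by rewrite mulfV.
Qed.

Lemma hitn_bnd n u : 0 <= hitn c a z n u <= 1.
Proof.
elim: n u => [|n IH] u /=.
  by case: (u == z); rewrite ?lexx ?ler01 //; case: (u == a); rewrite ?lexx ?ler01.
case: (u == z); rewrite ?lexx ?ler01 //; case: (u == a); rewrite ?lexx ?ler01 //.
apply/andP; split.
  by apply: sumr_ge0 => v _; rewrite mulr_ge0 ?trans_ge0 //; case/andP: (IH v).
apply: le_trans (sum_trans_le1 u); apply: ler_sum => v _.
by rewrite ler_piMr ?trans_ge0 //; case/andP: (IH v).
Qed.

Lemma hitn_mono n u : hitn c a z n u <= hitn c a z n.+1 u.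
Proof.
elim: n u => [|n IH] u.
  rewrite /=; case: (u == z) => //; case: (u == a) => //.
  by apply: sumr_ge0 => v _; rewrite mulr_ge0 ?trans_ge0 //; case/andP: (hitn_bnd 0 v).
rewrite [X in X <= _]/= [X in _ <= X]/=.
case: (u == z) => //; case: (u == a) => //.
by apply: ler_sum => v _; rewrite ler_wpM2l ?trans_ge0.
Qed.

Lemma hitn_cvg u : (fun n => hitn c a z n u) @ \oo --> hit_before c a z u.
Proof.
have H : cvgn (fun n => hitn c a z n u).
  apply: nondecreasing_is_cvgn.
    apply/nondecreasing_seqP => n; exact: hitn_mono.
  exists 1 => _ [n _ <-]; by case/andP: (hitn_bnd n u).
exact: H.
Qed.

Lemma hit_harm u : u != z -> u != a ->
  hit_before c a z u = \sum_v trans c u v * hit_before c a z v.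
Proof.
move=> uz ua.
have H1 : (fun n => hitn c a z n.+1 u) @ \oo --> hit_before c a z u.
  by have := hitn_cvg u; rewrite -(cvg_shiftS (fun n => hitn c a z n u)).
have E : (fun n => hitn c a z n.+1 u) = (fun n => \sum_v trans c u v * hitn c a z n v).
  by apply: funext => n /=; rewrite (negbTE uz) (negbTE ua).
rewrite E in H1.
have H2 : (fun n => \sum_v trans c u v * hitn c a z n v) @ \oo -->
    \sum_v trans c u v * hit_before c a z v.
  have Hc : continuous (fun x : R^o * R^o => x.1 + x.2) by exact: add_continuous.
  have Hv : forall v, xpredT v -> (fun n => trans c u v * hitn c a z n v) @ \oo --> trans c u v * hit_before c a z v.
    by move=> v _; apply: cvgMl_tmp; exact: hitn_cvg.
  have H := @cvg_big R^o Omega +%R 0 xpredT Hc nat eventually (index_enum Omega)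
    (fun v n => trans c u v * hitn c a z n v) (fun v => trans c u v * hit_before c a z v) _ Hv.
  by apply: H; apply: eventually_filter.
exact: (cvg_unique _ H1 H2).
Qed.

Lemma hit_const u r : (forall n, hitn c a z n u = r) -> hit_before c a z u = r.
Proof.
move=> Hr; have H := hitn_cvg u.
have E : (fun n => hitn c a z n u) = (fun _ => r) by apply: funext.
rewrite E in H; exact: (cvg_unique _ H (cvg_cst r)).
Qed.

End Lim.

Lemma cauchy_schwarz (R : realType) (k : nat) (t : nat -> R) :
  (\sum_(i < k) t i) ^+ 2 <= k%:R * \sum_(i < k) t i ^+ 2.
Proof.
set S := \sum_(i < k) t i; set Q := \sum_(i < k) t i ^+ 2.
have H0 : 0 <= \sum_(i < k) \sum_(j < k) (t i - t j) ^+ 2.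
  by apply: sumr_ge0 => i _; apply: sumr_ge0 => j _; exact: sqr_ge0.
have E : \sum_(i < k) \sum_(j < k) (t i - t j) ^+ 2 =
   \sum_(i < k) \sum_(j < k) t i ^+ 2 + \sum_(i < k) \sum_(j < k) t j ^+ 2
   - 2 * \sum_(i < k) \sum_(j < k) (t i * t j).
  rewrite mulr_sumr -big_split -sumrB; apply: eq_bigr => i _.
  rewrite mulr_sumr -big_split -sumrB; apply: eq_bigr => j _.
  by change ((t i - t j) ^+ 2 = t i ^+ 2 + t j ^+ 2 - 2 * (t i * t j)); ring.
have E1 : \sum_(i < k) \sum_(j < k) t i ^+ 2 = k%:R * Q.
  rewrite /Q mulr_sumr; apply: eq_bigr => i _.
  by rewrite sumr_const card_ord mulr_natl.
have E2 : \sum_(i < k) \sum_(j < k) t j ^+ 2 = k%:R * Q.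
  by rewrite sumr_const card_ord mulr_natl.
have E3 : \sum_(i < k) \sum_(j < k) (t i * t j) = S ^+ 2.
  rewrite expr2 /S mulr_suml; apply: eq_bigr => i _.
  by rewrite mulr_sumr.
rewrite E E1 E2 E3 in H0; lra.
Qed.

Section Energy.
Context (R : realType) (Omega : finType) (c : Omega -> Omega -> R)
  (c_ge0 : forall u v, 0 <= c u v) (c_sym : forall u v, c u v = c v u)
  (a x z : Omega) (haz : a != z) (hxz : x != z)
  (hz : forall u, u != x -> u != z -> c u z = 0)
  (h : Omega -> R) (ha : h a = 1) (hz0 : h z = 0)
  (hharm : forall u, u != z -> u != a -> h u = \sum_v trans c u v * h v).

Definition D u := \sum_v c u v * (h u - h v).

Lemma D_int u : u != z -> u != a -> D u = 0.
Proof.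
move=> uz ua; rewrite /D.
set S := \sum_v c u v.
have [S0|S0] := eqVneq S 0.
  have H := psumr_eq0P (fun w _ => c_ge0 u w) S0.
  by apply: big1 => v _; rewrite H ?mul0r.
have Hu : S * h u = \sum_v c u v * h v.
  rewrite {1}(hharm u uz ua) /trans mulr_sumr; apply: eq_bigr => v _.
  by rewrite mulrA mulrCA mulfV // mulr1.
have -> : \sum_v c u v * (h u - h v) = S * h u - \sum_v c u v * h v.
  by rewrite mulr_suml -sumrB; apply: eq_bigr => v _; rewrite mulrBr.
by rewrite Hu subrr.
Qed.

Lemma sumD : \sum_u D u = 0.
Proof.
rewrite /D.
have -> : \sum_u \sum_v c u v * (h u - h v) =
   \sum_u \sum_v c u v * h u - \sum_u \sum_v c u v * h v.
  rewrite -sumrB; apply: eq_bigr => u _; rewrite -sumrB; apply: eq_bigr => v _.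
  by rewrite mulrBr.
rewrite [X in _ - X]exchange_big /=.
apply/eqP; rewrite subr_eq0; apply/eqP; apply: eq_bigr => u _; apply: eq_bigr => v _; by rewrite c_sym.
Qed.

Lemma energy : \sum_u \sum_v c u v * (h u - h v) ^+ 2 = 2 * \sum_u h u * D u.
Proof.
have -> : \sum_u \sum_v c u v * (h u - h v) ^+ 2 =
   \sum_u \sum_v h u * (c u v * (h u - h v)) - \sum_u \sum_v h v * (c u v * (h u - h v)).
  rewrite -sumrB; apply: eq_bigr => u _; rewrite -sumrB; apply: eq_bigr => v _.
  by rewrite expr2; ring.
rewrite [X in _ - X]exchange_big /=.
have -> : \sum_v \sum_u h v * (c u v * (h u - h v)) =
   - \sum_v \sum_u h v * (c v u * (h v - h u)).
  rewrite -sumrN; apply: eq_bigr => v _; rewrite -sumrN; apply: eq_bigr => u _.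
  by rewrite c_sym; ring.
rewrite opprK /D.
have -> : \sum_u h u * \sum_v c u v * (h u - h v) = \sum_u \sum_v h u * (c u v * (h u - h v)).
  by apply: eq_bigr => u _; rewrite mulr_sumr.
ring.
Qed.

Lemma Da : D a = c x z * h x.
Proof.
have := sumD; rewrite (bigD1 a) //= (bigD1 z) //=; last by rewrite eq_sym.
rewrite big1; last first.
  by move=> u /andP[ua uz]; apply: D_int.
move=> H.
have Hz : D z = - (c x z * h x).
  rewrite /D hz0 (bigD1 x) //= big1; last first.
    move=> v vx; have [->|vz] := eqVneq v z; first by rewrite hz0 subrr mulr0.
    by rewrite c_sym hz // mul0r.
  by rewrite c_sym; ring.
rewrite Hz in H; lra.
Qed.

Lemma total_energy : \sum_u \sum_v c u v * (h u - h v) ^+ 2 = 2 * (c x z * h x).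
Proof.
rewrite energy -Da (bigD1 a) //= ha mul1r big1 ?addr0 //.
move=> u ua; have [->|uz] := eqVneq u z; first by rewrite hz0 mul0r.
by rewrite D_int // mulr0.
Qed.

Lemma sum_uniq_le (s : seq (Omega * Omega)) : uniq s ->
  \sum_(p <- s) c p.1 p.2 * (h p.1 - h p.2) ^+ 2 <= 2 * (c x z * h x).
Proof.
move=> us; rewrite -total_energy pair_big /= big_uniq // big_mkcond /=.
apply: ler_sum => p _; case: ifP => _ //.
by rewrite mulr_ge0 ?c_ge0 ?sqr_ge0.
Qed.

Lemma simple_bound (k : nat) (ys : nat -> Omega) (y0 : ys 0%N = x) (yk : ys k = a)
  (rho : R) (hrho : 0 < rho) (Cpos : 0 < c x z)
  (hp : forall i, (i < k)%N -> rho^-1 * c x z <= c (ys i) (ys i.+1))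
  (inj : forall i j, (i <= k)%N -> (j <= k)%N -> ys i = ys j -> i = j) :
  1 / (k%:R * rho + 1) <= h x.
Proof.
set C := c x z.
have cpos : forall i, (i < k)%N -> 0 < c (ys i) (ys i.+1).
  move=> i ik; apply: lt_le_trans (hp i ik); by rewrite mulr_gt0 ?invr_gt0.
have znot : forall i, (i <= k)%N -> ys i != z.
  move=> i ik; apply/negP => /eqP yiz.
  have i0 : i != 0%N by apply/eqP => i0; move: hxz; rewrite -y0 -i0 yiz eqxx.
  have ik' : i != k by apply/eqP => ik'; move: haz; rewrite -yk -ik' yiz eqxx.
  have ipos : (0 < i)%N by rewrite lt0n.
  have ilt : (i < k)%N by rewrite ltn_neqAle ik' ik.
  have Hprev : ys i.-1 = x.
    have := cpos i.-1 (leq_ltn_trans (leq_pred i) ilt).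
    rewrite prednK // yiz.
    have [//|nx] := eqVneq (ys i.-1) x.
    have nz : ys i.-1 != z.
      apply/eqP => e; have := inj i.-1 i (leq_trans (leq_pred i) ik) ik.
      rewrite e yiz => /(_ erefl); lia.
    by rewrite hz // ltxx.
  have Hnext : ys i.+1 = x.
    have := cpos i ilt; rewrite yiz c_sym.
    have [//|nx] := eqVneq (ys i.+1) x.
    have nz : ys i.+1 != z.
      apply/eqP => e; have := inj i.+1 i ilt ik; rewrite e yiz => /(_ erefl).
      lia.
    by rewrite hz // ltxx.
  have := inj i.-1 i.+1 (leq_trans (leq_pred i) ik) ilt; rewrite Hprev Hnext.
  move=> /(_ erefl); lia.
set r := index_iota 0 k.
have rk : forall i, (i \in r) = (i < k)%N by move=> i; rewrite mem_index_iota.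
set L1 := [seq (ys i, ys i.+1) | i <- r].
set L2 := [seq (ys i.+1, ys i) | i <- r].
have us : uniq ((x, z) :: (z, x) :: (L1 ++ L2)).
  rewrite /= !mem_cat !inE cat_uniq.
  have n1 : forall p, p \in L1 -> (p.1 != z) && (p.2 != z).
    by move=> p /mapP [i]; rewrite rk => ik -> /=; rewrite !znot // ltnW.
  have n2 : forall p, p \in L2 -> (p.1 != z) && (p.2 != z).
    by move=> p /mapP [i]; rewrite rk => ik -> /=; rewrite !znot // ltnW.
  apply/and5P; split.
  - rewrite xpair_eqE (negbTE hxz) /=.
    by rewrite mem_cat; apply/negP => /orP [/n1|/n2] /=; rewrite eqxx andbF.
  - by apply/negP => /orP [/n1|/n2] /=; rewrite eqxx.
  - rewrite map_inj_in_uniq ?iota_uniq // => i j; rewrite !rk => ik jk [e _].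
    by apply: inj e; apply: ltnW.
  - apply/hasPn => p /mapP [i]; rewrite rk => ik ->; apply/negP => /mapP [j].
    rewrite rk => jk [e1 e2].
    have := inj _ _ ik (ltnW jk) e1; have := inj _ _ (ltnW ik) jk e2.
    lia.
  - rewrite map_inj_in_uniq ?iota_uniq // => i j; rewrite !rk => ik jk [_ e].
    by apply: inj e; apply: ltnW.
have Hs := sum_uniq_le _ us.
rewrite !big_cons big_cat !big_map /= in Hs.
set Q := \sum_(i <- r) c (ys i) (ys i.+1) * (h (ys i.+1) - h (ys i)) ^+ 2.
have E1 : \sum_(i <- r) c (ys i) (ys i.+1) * (h (ys i) - h (ys i.+1)) ^+ 2 = Q.
  by apply: eq_bigr => i _; rewrite -opprB sqrrN.
have E2 : \sum_(i <- r) c (ys i.+1) (ys i) * (h (ys i.+1) - h (ys i)) ^+ 2 = Q.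
  by apply: eq_bigr => i _; rewrite c_sym.
rewrite E1 E2 hz0 subr0 sub0r sqrrN [c z x]c_sym -/C in Hs.
have HQ : Q <= C * h x - C * h x ^+ 2 by lra.
have tel : \sum_(0 <= i < k) (h (ys i.+1) - h (ys i)) = 1 - h x.
  by have := telescope_sumr (fun i => h (ys i)) (leq0n k) => /= ->; rewrite yk y0 ha.
have CS := cauchy_schwarz R k (fun i => h (ys i.+1) - h (ys i)).
rewrite big_mkord in tel; rewrite tel in CS.
have HA : \sum_(0 <= i < k) (h (ys i.+1) - h (ys i)) ^+ 2 <= rho / C * Q.
  rewrite /Q mulr_sumr !big_seq; apply: ler_sum => i; rewrite rk => ik.
  have H1 : 1 <= rho / C * c (ys i) (ys i.+1).
    have -> : 1 = rho / C * (rho^-1 * C).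
      by field; rewrite gt_eqF // gt_eqF.
    by apply: ler_wpM2l; [rewrite divr_ge0 ?ltW|exact: hp].
  by rewrite mulrA; apply: ler_peMl; rewrite ?sqr_ge0.
rewrite big_mkord in HA.
have kge0 : 0 <= (k%:R : R) by [].
have Hf : (1 - h x) ^+ 2 <= k%:R * rho * (h x - h x ^+ 2).
  apply: le_trans CS _.
  have -> : k%:R * rho * (h x - h x ^+ 2) = k%:R * (rho / C * (C * h x - C * h x ^+ 2)).
    by field; rewrite gt_eqF.
  apply: ler_wpM2l => //; apply: le_trans HA _.
  by apply: ler_wpM2l => //; rewrite divr_ge0 ?ltW.
have Kge0 : 0 <= k%:R * rho by apply: mulr_ge0 => //; apply: ltW.
set K := k%:R * rho in Hf Kge0 *.
rewrite ler_pdivrMr; last by lra.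
have [h1|h1] := leP 1 (h x); first by nra.
nra.
Qed.

End Energy.

Theorem lemmaC5 (R : realType) (Omega : finType) (c : Omega -> Omega -> R)
  (c_ge0 : forall u v, 0 <= c u v) (c_sym : forall u v, c u v = c v u)
  (c_conn : connected_network c)
  (a x z : Omega) (haz : a != z) (hxz : x != z)
  (hz : forall u, u != x -> u != z -> c u z = 0)
  (k : nat) (xs : nat -> Omega) (hx0 : xs 0%N = x) (hxk : xs k = a)
  (rho : R) (hrho : 0 < rho)
  (hpath : forall i : nat, (0 < i <= k)%N -> c (xs i.-1) (xs i) >= rho^-1 * c x z) :
  hit_before c a z x >= 1 / (k%:R * rho + 1).
Proof.
have ha : hit_before c a z a = 1.
  by apply: (@hit_const R Omega c c_ge0 a z) => n; case: n => [|n] /=; rewrite (negbTE haz) eqxx.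
have hz0 : hit_before c a z z = 0.
  by apply: (@hit_const R Omega c c_ge0 a z) => n; case: n => [|n] /=; rewrite eqxx.
have hharm := @hit_harm R Omega c c_ge0 a z.
have Cpos : 0 < c x z.
  rewrite lt_neqAle c_ge0 andbT eq_sym; apply/negP => /eqP C0.
  have cl : fingraph.closed (fun s t => 0 < c s t) [pred u | u != z].
    move=> s t /= st; rewrite !inE.
    have nz : forall w, w != z -> c w z = 0.
      by move=> w wz; have [->|wx] := eqVneq w x; [exact: C0|exact: hz].
    case: (eqVneq s z) => [sz|sz]; case: (eqVneq t z) => [tz|tz] //; exfalso.
      by move: st; rewrite sz c_sym nz // ltxx.
    by move: st; rewrite tz nz // ltxx.
  have := closed_connect cl (c_conn x z); rewrite !inE eqxx hxz //.
move: xs hx0 hxk hpath; elim/ltn_ind: k => k IH xs hx0 hxk hpath.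
have [[i [j [ij [jk e]]]]|nex] :=
  pselect (exists i j, (i < j)%N /\ (j <= k)%N /\ xs i = xs j).
  pose d := (j - i)%N.
  pose ys n := if (n <= i)%N then xs n else xs (n + d)%N.
  have key : forall n, (i <= n)%N -> ys n = xs (n + d)%N.
    move=> n iN; rewrite /ys; case: ifP => // ni.
    have -> : n = i by apply/eqP; rewrite eqn_leq ni iN.
    by rewrite e /d subnKC // ltnW.
  have lt : (k - d < k)%N by rewrite /d; lia.
  have := IH (k - d)%N lt ys.
  have y0 : ys 0%N = x by rewrite /ys leq0n.
  have yk : ys (k - d)%N = a.
    by rewrite key; [rewrite subnK ?hxk // /d; lia | rewrite /d; lia].
  have yp : forall n, (0 < n <= k - d)%N -> rho^-1 * c x z <= c (ys n.-1) (ys n).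
    move=> n /andP[n0 nk].
    have [ni|ni] := leqP n i.
      rewrite /ys ni (leq_trans (leq_pred n) ni); apply: hpath.
      by rewrite n0 /=; lia.
    rewrite !key; [|lia|lia].
    have -> : (n.-1 + d = (n + d).-1)%N by lia.
    by apply: hpath; rewrite /d; lia.
  move=> /(_ y0 yk yp) H; apply: le_trans H.
  rewrite !div1r lef_pV2 ?posrE; last first.
  - by rewrite ltr_wpDl // mulr_ge0 // ltW.
  - by rewrite ltr_wpDl // mulr_ge0 // ltW.
  by rewrite lerD2r ler_pM2r // ler_nat leq_subr.
apply: (@simple_bound R Omega c c_ge0 c_sym a x z haz hxz hz _ ha hz0 hharm k xs hx0 hxk rho hrho Cpos).
  by move=> i ik; have := hpath i.+1; rewrite /= ik => /(_ erefl).
move=> i j ik jk e.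
have [ij|ji|//] := ltngtP i j.
  by exfalso; apply: nex; exists i, j.
by exfalso; apply: nex; exists j, i.
Qed.
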